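(* Let $G$ be connected with weights $w:E\to\mathbb{R}_{>0}$ and let $\pi$ be a vertex order. Every metric $m$ on $G_\pi^*$ that respects $w$ and satisfies the lower triangle inequality is customized, i.e. for all $s,t\in V$ there is an up-down $s$–$t$ path in $G_\pi^*$ whose $m$-length equals $\mathrm{dist}_I(s,t)$.
   Context: Let $G=(V,E)$ be a finite simple undirected graph with $n=|V|$ vertices. A vertex order is a bijection $\pi:\{1,\dots,n\}\to V$; the rank of $v$ is $\pi^{-1}(v)$. Contracting a vertex $v$ in a graph means deleting $v$ and its incident edges and adding an edge between every pair of former neighbors of $v$ that are not already adjacent. The core graph $G_{\pi,i}$ is obtained from $G$ by contracting $\pi(1),\dots,\pi(i-1)$ in this order. $G_\pi^*$ is the graph on $V$ whose edge set is the union of the edge sets of all $G_{\pi,i}$, $i=1,\dots,n$ (i.e. $G$ together with all edges inserted during the contractions). Let $w:E\to\mathbb{R}_{>0}$ and let $\mathrm{dist}_I(s,t)$ be the shortest $s$–$t$ path length in $(G,w)$. A metric is a map $m$ assigning to every edge of $G_\pi^*$ a value in $\mathbb{R}_{>0}\cup\{\infty\}$; the $m$-length of a path in $G_\pi^*$ is the sum of $m$ over its edges. An up-down path is a path $v_0,\dots,v_k$ in $G_\pi^*$ for which there is $j$ with the ranks strictly increasing along $v_0,\dots,v_j$ and strictly decreasing along $v_j,\dots,v_k$. $\mathrm{dist}_A(s,t)$ is the minimum $m$-length of an $s$–$t$ path in $G_\pi^*$, and $\mathrm{dist}_{UD}(s,t)$ the minimum $m$-length of an up-down $s$–$t$ path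 ($\infty$ if none). The metric $m$ respects $w$ if $\mathrm{dist}_A(s,t)=\mathrm{dist}_I(s,t)$ for all $s,t$; it is customized if moreover $\mathrm{dist}_{UD}(s,t)=\mathrm{dist}_A(s,t)$ for all $s,t$. It satisfies the lower triangle inequality if for every edge $\{x,y\}$ of $G_\pi^*$ and every vertex $z$ of rank smaller than the ranks of both $x$ and $y$ that is adjacent to both $x$ and $y$ in $G_\pi^*$, $m(\{x,y\})\le m(\{x,z\})+m(\{z,y\})$. *)

(* Defs.v *)
From HB Require Import structures.
From mathcomp Require Import all_boot all_order all_algebra.
Set Implicit Arguments. Unset Strict Implicit. Unset Printing Implicit Defensive.
Import Order.TTheory GRing.Theory Num.Theory.

Section CH.
Variable T : finType.
(* rank = pi^{-1}, with ranks 0..n-1 (paper: 1..n) *)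
Variable rank : T -> 'I_#|T|.

(* core i : edge relation of the core graph after contracting the
   vertices of rank 0, ..., i-1 (in this order), i.e. G_{pi,i+1} of the paper.
   Only vertices of rank >= i are present. *)
Fixpoint core (e : rel T) (i : nat) : rel T :=
  match i with
  | 0 => e
  | i'.+1 => fun x y =>
      [&& i' < rank x, i' < rank y, x != y &
          core e i' x y ||
          [exists v, [&& nat_of_ord (rank v) == i', core e i' v x & core e i' v y]]]
  end.

Definition gstar (e : rel T) : rel T :=
  fun x y => [exists i : 'I_#|T|, core e i x y].

Definition updown (s : T) (p : seq T) : Prop :=
  exists j : nat,
    sorted ltn (map (fun v => nat_of_ord (rank v)) (take j.+1 (s :: p))) /\
    sorted gtn (map (fun v => nat_of_ord (rank v)) (drop j (s :: p))).
End CH.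

Section Ext.
Variable R : realFieldType.
Local Open Scope ring_scope.

(* extended positive reals: None stands for infinity *)
Definition eadd (a b : option R) : option R :=
  match a, b with Some x, Some y => Some (x + y) | _, _ => None end.
Definition ele (a b : option R) : bool :=
  match a, b with
  | _, None => true
  | None, Some _ => false
  | Some x, Some y => x <= y
  end.

Variable T : finType.

Definition wlen (w : T -> T -> R) (s : T) (p : seq T) : R :=
  foldr +%R 0 (pairmap w s p).
Definition mlen (m : T -> T -> option R) (s : T) (p : seq T) : option R :=
  foldr eadd (Some 0) (pairmap m s p).

Definition is_distI (e : rel T) (w : T -> T -> R) (s t : T) (d : R) : Prop :=
  (forall p, path e s p -> last s p = t -> d <= wlen w s p) /\
  (exists p, [/\ path e s p, last s p = t & wlen w s p = d]).

Definition is_distA (estar : rel T) (m : T -> T -> option R) (s t : T)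
    (d : option R) : Prop :=
  (forall p, path estar s p -> last s p = t -> ele d (mlen m s p)) /\
  (d = None \/ exists p, [/\ path estar s p, last s p = t & mlen m s p = d]).

Definition is_metric (estar : rel T) (m : T -> T -> option R) : Prop :=
  (forall x y, m x y = m y x) /\
  (forall x y, estar x y -> if m x y is Some r then 0 < r else true).

Definition respects (e estar : rel T) (w : T -> T -> R) (m : T -> T -> option R) :=
  forall s t d, is_distI e w s t d -> is_distA estar m s t (Some d).

Definition lower_triangle (rank : T -> 'I_#|T|) (estar : rel T)
    (m : T -> T -> option R) : Prop :=
  forall x y z, estar x y -> estar x z -> estar z y ->
    (rank z < rank x)%N -> (rank z < rank y)%N ->
    ele (m x y) (eadd (m x z) (m z y)).
End Ext.

(* Main.v *)
Require Import Defs.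
From HB Require Import structures.
From mathcomp Require Import all_boot all_order all_algebra.
Import Order.TTheory GRing.Theory Num.Theory.
Local Open Scope ring_scope.
Set Implicit Arguments. Unset Strict Implicit.

Section Aux.
Variable R : realFieldType.

Definition nn (a : option R) : bool := if a is Some r then 0 <= r else true.

Lemma ele_refl (a : option R) : ele a a.
Proof. by case: a => //= r. Qed.

Lemma ele_trans (a b c : option R) : ele a b -> ele b c -> ele a c.
Proof. by case: a; case: b; case: c => //= x y z; apply: le_trans. Qed.

Lemma ele_add (a a' b b' : option R) : ele a a' -> ele b b' -> ele (eadd a b) (eadd a' b').
Proof.
by case: a; case: a'; case: b; case: b' => //= *; apply: lerD.
Qed.

Lemma eaddA (a b c : option R) : eadd a (eadd b c) = eadd (eadd a b) c.
Proof. by case: a; case: b; case: c => //= *; rewrite addrA. Qed.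

Lemma ele_addl (a c : option R) : nn a -> ele c (eadd a c).
Proof. by case: a; case: c => //= x y hy; rewrite lerDr. Qed.
End Aux.

Fixpoint udb (a : nat) (l : seq nat) : bool :=
  match l with
  | [::] => true
  | b :: l' => if (a < b)%N then udb b l' else path gtn a l
  end.

Lemma udb_take (l : seq nat) (a : nat) : udb a l ->
  exists j, sorted ltn (take j.+1 (a :: l)) /\ sorted gtn (drop j (a :: l)).
Proof.
elim: l a => [|b l IH] a /=; first by move=> _; exists 0%N.
case: ifP => hab.
  move=> /IH [j [h1 h2]]; exists j.+1; split => //=.
  by move: h1; rewrite /= hab.
by move=> h; exists 0%N.
Qed.

Section Graph.
Variable T : finType.
Variable rank : T -> 'I_#|T|.
Variable e : rel T.
Hypothesis e_sym : symmetric e.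
Hypothesis e_irr : irreflexive e.

Lemma core_symI i x y : core rank e i x y -> core rank e i y x.
Proof.
elim: i x y => [|i IH] x y /=; first by rewrite e_sym.
case/and4P => hx hy hne /orP [h|/existsP [v /and3P [hv h1 h2]]];
  apply/and4P; split => //; rewrite 1?eq_sym //; apply/orP.
  by left; apply: IH.
by right; apply/existsP; exists v; rewrite hv h1 h2.
Qed.

Lemma core_ne i x y : core rank e i x y -> x != y.
Proof.
case: i => [|i] /=; last by case/and4P.
by apply: contraTneq => ->; rewrite e_irr.
Qed.

Lemma core_rank i x y : core rank e i x y -> (i <= rank x)%N && (i <= rank y)%N.
Proof. by case: i => [|i] //= /and4P [-> ->]. Qed.

Lemma core_mono i k x y : core rank e i x y -> (i <= k)%N -> (k <= rank x)%N ->
  (k <= rank y)%N -> core rank e k x y.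
Proof.
move=> hc; elim: k => [|k IH]; first by rewrite leqn0 => /eqP <-.
rewrite leq_eqVlt => /orP [/eqP <- //|hik] hx hy /=.
rewrite hx hy (core_ne hc) /=.
by rewrite IH // ltnW.
Qed.

Definition gs := gstar rank e.

Lemma gs_sym x y : gs x y -> gs y x.
Proof. by case/existsP => i h; apply/existsP; exists i; apply: core_symI. Qed.

Lemma gs_ne x y : gs x y -> x != y.
Proof. by case/existsP => i /core_ne. Qed.

Lemma gs_core v a : gs v a -> (rank v <= rank a)%N -> core rank e (rank v) v a.
Proof.
case/existsP => i hi ha; apply: (core_mono hi) => //.
by case/andP: (core_rank hi).
Qed.

Lemma gs_key v a b : gs v a -> gs v b -> (rank v < rank a)%N -> (rank v < rank b)%N ->
  a != b -> gs a b.
Proof.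
move=> hva hvb ha hb hab.
have hc1 := gs_core hva (ltnW ha); have hc2 := gs_core hvb (ltnW hb).
have hlt : ((rank v).+1 < #|T|)%N by apply: leq_ltn_trans ha _.
apply/existsP; exists (Ordinal hlt) => /=.
rewrite ha hb hab /=; apply/orP; right; apply/existsP; exists v.
by rewrite eqxx hc1 hc2.
Qed.
End Graph.

Theorem mainTheorem5 (R : realFieldType) (T : finType) (e : rel T)
  (e_sym : symmetric e) (e_irr : irreflexive e)
  (e_conn : forall s t : T, connect e s t)
  (w : T -> T -> R) (w_sym : forall x y, w x y = w y x)
  (w_pos : forall x y, e x y -> 0 < w x y)
  (rank : T -> 'I_#|T|) (rank_bij : bijective rank)
  (m : T -> T -> option R)
  (m_metric : is_metric (gstar rank e) m)
  (m_resp : respects e (gstar rank e) w m)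
  (m_lti : lower_triangle rank (gstar rank e) m) :
  forall (s t : T) (d : R), is_distI e w s t d ->
    exists p : seq T,
      [/\ path (gstar rank e) s p, last s p = t, updown rank s p
        & mlen m s p = Some d].
Proof.
have rinj := bij_inj rank_bij.
have rne x y : x != y -> nat_of_ord (rank x) != rank y.
  by apply: contraNneq => /val_inj /rinj ->.
have mnn x y : gstar rank e x y -> nn (m x y).
  by case: m_metric => _ /(_ x y); rewrite /nn; case: (m x y) => // r h /h /ltW.
have prep : forall n s x q, (size q < n)%N -> gstar rank e s x -> path (gstar rank e) x q ->
    udb (rank x) [seq nat_of_ord (rank v) | v <- q] ->
    exists q2, [/\ path (gstar rank e) s q2, last s q2 = last x q,
      udb (rank s) [seq nat_of_ord (rank v) | v <- q2] & ele (mlen m s q2) (mlen m s (x :: q))].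
  elim=> [//|n IH] s x q hn hsx hp hu.
  case: (ltngtP (rank s) (rank x)) => [hlt|hgt|heq].
  - exists (x :: q); split => //=; first by rewrite hsx.
      by rewrite hlt.
    exact: ele_refl.
  - case: q hn hp hu => [|q1 q'] hn hp hu.
      exists [:: x]; split => //=; first by rewrite hsx.
        by rewrite ltnNge (ltnW hgt) /= hgt.
      exact: ele_refl.
    case: (ltngtP (rank x) (rank q1)) => [hv|hd|heq]; last first.
    + case/andP: hp => hxq _.
      by move: (rne x q1 (gs_ne e_irr hxq)); rewrite heq eqxx.
    + exists (x :: q1 :: q'); split => //=.
      * by rewrite hsx.
      * by rewrite ltnNge (ltnW hgt) /= hgt; move: hu => /=; rewrite ltnNge (ltnW hd).
      * exact: ele_refl.
    move: hp => /= /andP [hxq1 hp']; move: hu => /=; rewrite hv => hu.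
    have nsx := mnn _ _ hsx.
    have nxq := mnn _ _ hxq1.
    case: (eqVneq s q1) => [esq|nsq].
    + subst q1; exists q'; split => //.
      rewrite /mlen /= -/(mlen m s q').
      apply: ele_trans (ele_addl _ nxq) (ele_addl _ nsx).
    + have hsq : gstar rank e s q1.
        by apply: (gs_key e_irr (gs_sym e_sym hsx)) => //.
      have lt := m_lti s q1 x hsq hsx hxq1 hgt hv.
      have [q2 [h1 h2 h3 h4]] := IH s q1 q' hn hsq hp' hu.
      exists q2; split => //.
      apply: ele_trans h4 _.
      rewrite /mlen /= -/(mlen m q1 q') eaddA.
      apply: ele_add => //; exact: ele_refl.
  - by move: (rne s x (gs_ne e_irr hsx)); rewrite heq eqxx.
have red : forall p s, path (gstar rank e) s p -> exists q,
    [/\ path (gstar rank e) s q, last s q = last s p,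
      udb (rank s) [seq nat_of_ord (rank v) | v <- q] & ele (mlen m s q) (mlen m s p)].
  elim=> [|x p IH] s /=; first by move=> _; exists [::]; split => //; exact: ele_refl.
  case/andP => hsx hp; have [q [h1 h2 h3 h4]] := IH x hp.
  have [q2 [g1 g2 g3 g4]] := prep (size q).+1 s x q (ltnSn _) hsx h1 h3.
  exists q2; split => //; first by rewrite g2 h2.
  apply: ele_trans g4 _; rewrite /mlen /=.
  apply: ele_add; [exact: ele_refl| exact: h4].
move=> s t d hd; have [hA [//|[p [hp hl hm]]]] := m_resp s t d hd.
have [q [h1 h2 h3 h4]] := red p s hp.
exists q; split => //; first by rewrite h2.
  have [j [u1 u2]] := udb_take h3.
  by exists j; rewrite !map_take !map_drop.
have := hA q h1 (etrans h2 hl); move: h4; rewrite hm.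
case: (mlen m s q) => //= r h1' h2'; congr Some; by apply: le_anti; rewrite h1' h2'.
Qed.
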